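(* Let $(G,t)$ be a problem instance, let $X$ be a tidy modulator of $G$, and let $C$ be a connected component of $G-X$ such that (1) $N_G(C)$ is a limit-2 clique for $(G-V(C),t)$, and (2) for every pair $\{x,y\}\subseteq N_G(C)$, either $\mathrm{tw}(G[V(C)\cup\{x,y\}])\le 2$ or $\{x,y\}$ is a limit-1 subset for $(G-V(C),t)$. Then $(G,t)$ has a solution if and only if $(G-V(C),t)$ has a solution.
   Context: $\mathrm{tw}$ is treewidth. A problem instance is a pair $(G,t)$ with $G$ a graph and $t\in\mathbb{N}$; a solution is $S\subseteq V(G)$ with $|S|\le t$ and $\mathrm{tw}(G-S)\le 2$. A modulator of $G$ is $X$ with $\mathrm{tw}(G-X)\le 2$; a tidy modulator additionally satisfies $\mathrm{tw}(G-(X\setminus\{x\}))\le 2$ for all $x\in X$. A set $Z$ is a limit-$m$ subset for $(G,t)$ if every solution $S$ for $(G,t)$ has $|Z\setminus S|\le m$; it is a limit-$m$ clique if also $G[Z]$ is a clique. $N_G(C)$ is the set of vertices outside $C$ adjacent to $C$. *)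

(* Defs.v *)
(* A graph G is a symmetric irreflexive relation e on a finType T;
   subgraphs G[W] are given by vertex sets W : {set T}. *)
From mathcomp Require Import all_boot.
Set Implicit Arguments. Unset Strict Implicit. Unset Printing Implicit Defensive.

Section Graphs.
Variables (T : finType) (e : rel T).

Definition is_tree (n : nat) (tr : rel 'I_n.+1) : Prop :=
  [/\ symmetric tr, irreflexive tr,
      (forall i j, connect tr i j) &
      (forall i j, tr i j ->
         ~~ connect [rel a b | tr a b && ([set a; b] != [set i; j])] i j)].

Definition tree_decomp_of_width (W : {set T}) (k : nat)
    (n : nat) (tr : rel 'I_n.+1) (B : 'I_n.+1 -> {set T}) : Prop :=
  [/\ is_tree tr,
      (forall i, B i \subset W) /\ (forall i, #|B i| <= k.+1),
      (forall v, v \in W -> exists i, v \in B i),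
      (forall u v, u \in W -> v \in W -> e u v -> exists i, (u \in B i) && (v \in B i)) &
      (forall v i j, v \in B i -> v \in B j ->
         connect [rel a b | [&& tr a b, v \in B a & v \in B b]] i j)].

Definition tw_le (W : {set T}) (k : nat) : Prop :=
  exists n (tr : rel 'I_n.+1) (B : 'I_n.+1 -> {set T}), tree_decomp_of_width W k tr B.

Definition solution (W : {set T}) (t : nat) (S : {set T}) : Prop :=
  [/\ S \subset W, #|S| <= t & tw_le (W :\: S) 2].

Definition modulator (X : {set T}) : Prop := tw_le (~: X) 2.

Definition tidy_modulator (X : {set T}) : Prop :=
  modulator X /\ (forall x, x \in X -> tw_le (~: (X :\ x)) 2).

Definition component_of (W C : {set T}) : Prop :=
  [/\ C \subset W, C != set0,
      (forall u v, u \in C -> v \in C ->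
         connect [rel a b | [&& e a b, a \in C & b \in C]] u v) &
      (forall u v, u \in C -> v \in W :\: C -> ~~ e u v)].

Definition nbhd (C : {set T}) : {set T} :=
  [set v | (v \notin C) && [exists u in C, e u v]].

Definition limit_subset (W : {set T}) (t m : nat) (Z : {set T}) : Prop :=
  forall S, solution W t S -> #|Z :\: S| <= m.

Definition limit_clique (W : {set T}) (t m : nat) (Z : {set T}) : Prop :=
  limit_subset W t m Z /\ (forall u v, u \in Z -> v \in Z -> u != v -> e u v).

End Graphs.

(* Main.v *)
Require Import Defs.
From mathcomp Require Import all_boot.

Section Aux.
Set Implicit Arguments. Unset Strict Implicit. Unset Printing Implicit Defensive.

Lemma connect_hom (T1 T2 : finType) (r1 : rel T1) (r2 : rel T2) (f : T1 -> T2) :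
  (forall a b, r1 a b -> connect r2 (f a) (f b)) ->
  forall x y, connect r1 x y -> connect r2 (f x) (f y).
Proof.
move=> H x y /connectP [p]; elim: p x => [|z p IH] x /=.
  by move=> _ ->; exact: connect0.
move=> /andP[h1 h2] Ey; exact: connect_trans (H _ _ h1) (IH _ h2 Ey).
Qed.

Lemma connect_inv (T1 : finType) (U : eqType) (r1 : rel T1) (f : T1 -> U) :
  (forall a b, r1 a b -> f a = f b) ->
  forall x y, connect r1 x y -> f x = f y.
Proof.
move=> H x y /connectP [p]; elim: p x => [|z p IH] x /=.
  by move=> _ ->.
move=> /andP[h1 h2] Ey; rewrite (H _ _ h1); exact: IH.
Qed.

Section G.
Variables (T : finType) (e : rel T).

Lemma tw_mono (W W' : {set T}) k : tw_le e W k -> W' \subset W -> tw_le e W' k.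
Proof.
move=> [n [tr [B [Htr [Bs Bc] Hcov Hed Hcon]]]] sW.
exists n, tr, (fun i => B i :&: W'); split => //.
- split=> i; first exact: subsetIr.
  exact: leq_trans (subset_leq_card (subsetIl _ _)) (Bc i).
- move=> v vW; have [i vi] := Hcov v (subsetP sW v vW).
  by exists i; rewrite inE vi.
- move=> u v uW vW euv; have [i /andP[ui vi]] := Hed u v (subsetP sW _ uW) (subsetP sW _ vW) euv.
  by exists i; rewrite !inE ui vi uW vW.
- move=> v i j; rewrite !inE => /andP[vi vW] /andP[vj _].
  apply: (connect_hom (f := id)) (Hcon v i j vi vj) => a b /= /and3P[ab va vb].
  by apply: connect1; rewrite /= !inE ab va vb vW.
Qed.

Lemma clique_bag (W K : {set T}) k n (tr : rel 'I_n.+1) (B : 'I_n.+1 -> {set T}) :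
  tree_decomp_of_width e W k tr B -> K \subset W -> #|K| <= 2 ->
  (forall u v, u \in K -> v \in K -> u != v -> e u v) ->
  exists i, K \subset B i.
Proof.
move=> [_ _ Hcov Hed _] KW Kc Kcl.
have : (#|K| == 0) || (#|K| == 1) || (#|K| == 2) by case: #|K| Kc => [|[|[|]]].
case/orP => [/orP[]|].
- by rewrite cards_eq0 => /eqP ->; exists ord0; exact: sub0set.
- case/cards1P => x Kx; have xW : x \in W by apply: (subsetP KW); rewrite Kx set11.
  by have [i xi] := Hcov x xW; exists i; rewrite Kx sub1set.
- case/cards2P => x [y [xy Kxy]].
  have xK : x \in K by rewrite Kxy !inE eqxx.
  have yK : y \in K by rewrite Kxy !inE eqxx orbT.
  have [i /andP[xi yi]] := Hed x y (subsetP KW _ xK) (subsetP KW _ yK) (Kcl _ _ xK yK xy).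
  by exists i; rewrite Kxy subUset !sub1set xi yi.
Qed.
End G.

Section Glue.
Variables (n1 n2 : nat) (tr1 : rel 'I_n1.+1) (tr2 : rel 'I_n2.+1) (i1 : 'I_n1.+1) (i2 : 'I_n2.+1).
Local Notation N := 'I_(n1.+1 + n2.+1).

Definition gtr (a b : N) : bool :=
  match split a, split b with
  | inl a', inl b' => tr1 a' b'
  | inr a', inr b' => tr2 a' b'
  | inl a', inr b' => (a' == i1) && (b' == i2)
  | inr a', inl b' => (a' == i2) && (b' == i1)
  end.

Lemma splitL (a : 'I_n1.+1) : split (lshift n2.+1 a) = inl a.
Proof. exact: (unsplitK (inl a)). Qed.
Lemma splitR (a : 'I_n2.+1) : split (rshift n1.+1 a) = inr a.
Proof. exact: (unsplitK (inr a)). Qed.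

Lemma node_ind (P : N -> Prop) : (forall a, P (lshift _ a)) -> (forall b, P (rshift _ b)) -> forall x, P x.
Proof. by move=> HL HR x; rewrite -(splitK x); case: (split x). Qed.

Lemma gtrLL a b : gtr (lshift _ a) (lshift _ b) = tr1 a b.
Proof. by rewrite /gtr !splitL. Qed.
Lemma gtrRR a b : gtr (rshift _ a) (rshift _ b) = tr2 a b.
Proof. by rewrite /gtr !splitR. Qed.
Lemma gtrLR a b : gtr (lshift _ a) (rshift _ b) = (a == i1) && (b == i2).
Proof. by rewrite /gtr splitL splitR. Qed.
Lemma gtrRL a b : gtr (rshift _ a) (lshift _ b) = (a == i2) && (b == i1).
Proof. by rewrite /gtr splitL splitR. Qed.

Lemma lshift_inj' : injective (@lshift n1.+1 n2.+1).
Proof. by move=> a b /(congr1 split); rewrite !splitL => -[]. Qed.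
Lemma rshift_inj' : injective (@rshift n1.+1 n2.+1).
Proof. by move=> a b /(congr1 split); rewrite !splitR => -[]. Qed.
Lemma lr_neq a b : lshift n2.+1 a != rshift n1.+1 b.
Proof. by apply/eqP => /(congr1 split); rewrite splitL splitR. Qed.

Lemma set2_inj (U V : finType) (f : U -> V) (x y a b : U) : injective f ->
  [set f x; f y] = [set f a; f b] -> [set x; y] = [set a; b].
Proof.
move=> fi E; apply: (imset_inj fi).
by rewrite !imsetU1 !imset_set1.
Qed.

Definition minus (T : finType) (r : rel T) i j := [rel a b | r a b && ([set a; b] != [set i; j])].

Lemma set2_imset (U V : finType) (f : U -> V) x y : [set f x; f y] = f @: [set x; y].
Proof. by rewrite imsetU1 imset_set1. Qed.
Lemma glue_tree : is_tree tr1 -> is_tree tr2 -> @is_tree (n1 + n2.+1) gtr.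
Proof.
move=> [s1 ir1 c1 m1] [s2 ir2 c2 m2].
have gs : symmetric gtr.
  move=> x y; elim/node_ind: x; elim/node_ind: y => a b;
   rewrite ?gtrLL ?gtrRR ?gtrLR ?gtrRL; by [rewrite s1|rewrite s2|rewrite andbC].
split => //.
- by elim/node_ind => a; rewrite ?gtrLL ?gtrRR.
- have H : forall x, connect gtr x (lshift _ i1).
    elim/node_ind => a.
      apply: (connect_hom (f := lshift n2.+1)) (c1 a i1) => x y h.
      by apply: connect1; rewrite gtrLL.
    apply: (@connect_trans _ _ (rshift _ i2)).
      have := (@connect_hom _ N tr2 gtr (@rshift n1.+1 n2.+1)). move=> /(_ _ _ _ (c2 a i2)); apply => x y h.
      by apply: connect1; rewrite gtrRR.
    by apply: connect1; rewrite gtrRL !eqxx.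
  have sg : connect_sym gtr by apply: sym_connect_sym.
  by move=> x y; rewrite (connect_trans (H x)) // sg.
- elim/node_ind => a; elim/node_ind => b; rewrite ?gtrLL ?gtrRR ?gtrLR ?gtrRL => h.
  + apply/negP => C; move/negP: (m1 a b h); apply.
    pose f (x : N) := if split x is inl x' then x' else i1.
    have := @connect_hom _ _ _ (minus tr1 a b) f _ _ _ C; rewrite /f !splitL; apply.
    elim/node_ind => x; elim/node_ind => y; rewrite /f ?splitL ?splitR /=;
      rewrite ?gtrLL ?gtrRR ?gtrLR ?gtrRL => /andP[hh ne]; try exact: connect0;
      try by move/andP: hh => [/eqP ? /eqP ?]; subst; exact: connect0.
    apply: connect1; rewrite /= hh /=; apply: contra ne => /eqP E.
    apply/eqP; rewrite !set2_imset.
    by rewrite E.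
  + move/andP: h => [/eqP Ea /eqP Eb]; subst a b; apply/negP => C.
    pose f (x : N) := if split x is inl _ then false else true.
    have := @connect_inv _ _ _ f _ _ _ C; rewrite /f splitL splitR /= => HH.
    suff: false = true by []. apply: HH.
    elim/node_ind => x; elim/node_ind => y; rewrite /f ?splitL ?splitR //=;
      rewrite ?gtrLR ?gtrRL => /andP[/andP[/eqP -> /eqP ->]]; rewrite ?eqxx //.
    by rewrite setUC eqxx.
  + move/andP: h => [/eqP Ea /eqP Eb]; subst a b; apply/negP => C.
    pose f (x : N) := if split x is inl _ then false else true.
    have := @connect_inv _ _ _ f _ _ _ C; rewrite /f splitL splitR /= => HH.
    suff: true = false by []. apply: HH.
    elim/node_ind => x; elim/node_ind => y; rewrite /f ?splitL ?splitR //=;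
      rewrite ?gtrLR ?gtrRL => /andP[/andP[/eqP -> /eqP ->]]; rewrite ?eqxx //.
    by rewrite setUC eqxx.
  + apply/negP => C; move/negP: (m2 a b h); apply.
    pose f (x : N) := if split x is inr x' then x' else i2.
    have := @connect_hom _ _ _ (minus tr2 a b) f _ _ _ C; rewrite /f !splitR; apply.
    elim/node_ind => x; elim/node_ind => y; rewrite /f ?splitL ?splitR /=;
      rewrite ?gtrLL ?gtrRR ?gtrLR ?gtrRL => /andP[hh ne]; try exact: connect0;
      try by move/andP: hh => [/eqP ? /eqP ?]; subst; exact: connect0.
    apply: connect1; rewrite /= hh /=; apply: contra ne => /eqP E.
    apply/eqP; rewrite !set2_imset.
    by rewrite E.
Qed.
End Glue.

Section GD.
Variables (T : finType) (e : rel T).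
Hypothesis e_sym : symmetric e.

Lemma glue_tw (A B : {set T}) k : tw_le e A k -> tw_le e B k ->
  #|A :&: B| <= 2 -> (forall u v, u \in A :&: B -> v \in A :&: B -> u != v -> e u v) ->
  (forall u v, u \in B :\: A -> v \in A :\: B -> ~~ e u v) ->
  tw_le e (A :|: B) k.
Proof.
move=> [n1 [tr1 [B1 D1]]] [n2 [tr2 [B2 D2]]] Kc Kcl Hno.
have [i1 Ki1] := clique_bag D1 (subsetIl _ _) Kc Kcl.
have [i2 Ki2] := clique_bag D2 (subsetIr _ _) Kc Kcl.
case: D1 => [T1 [Bs1 Bc1] Cov1 Ed1 Con1]; case: D2 => [T2 [Bs2 Bc2] Cov2 Ed2 Con2].
pose gB (x : 'I_(n1.+1 + n2.+1)) := match split x with inl a => B1 a | inr a => B2 a end.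
have gBL a : gB (lshift _ a) = B1 a by rewrite /gB splitL.
have gBR a : gB (rshift _ a) = B2 a by rewrite /gB splitR.
have TT := glue_tree i1 i2 T1 T2.
have gs := TT; case: gs => gs _ _ _.
exists (n1 + n2.+1), (gtr tr1 tr2 i1 i2), gB; split => //.
- split; elim/node_ind => a; rewrite ?gBL ?gBR.
  + exact: subset_trans (Bs1 a) (subsetUl _ _).
  + exact: subset_trans (Bs2 a) (subsetUr _ _).
  + exact: Bc1.
  + exact: Bc2.
- move=> v; rewrite inE => /orP[vA|vB].
    by have [i vi] := Cov1 v vA; exists (lshift _ i); rewrite gBL.
  by have [i vi] := Cov2 v vB; exists (rshift n1.+1 i); rewrite gBR.
- move=> u v uAB vAB euv.
  have E1 : u \in A -> v \in A -> exists i, (u \in gB i) && (v \in gB i).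
    by move=> uA vA; have [i hi] := Ed1 u v uA vA euv; exists (lshift _ i); rewrite gBL.
  move: uAB vAB; rewrite !inE.
  have [uB|uB] := boolP (u \in B); have [vB|vB] := boolP (v \in B);
    rewrite ?orbT ?orbF => uA vA.
  - by have [i hi] := Ed2 u v uB vB euv; exists (rshift n1.+1 i); rewrite gBR.
  - have [uA'|uA'] := boolP (u \in A); first exact: E1.
    by move: (Hno u v); rewrite !inE uA' uB vB vA euv => /(_ isT isT).
  - have [vA'|vA'] := boolP (v \in A); first exact: E1.
    by move: (Hno v u); rewrite !inE uA vB uB vA' e_sym euv => /(_ isT isT).
  - exact: E1.
- move=> v i j.
  have HL a b : v \in B1 a -> v \in B1 b ->
      connect [rel x y | [&& gtr tr1 tr2 i1 i2 x y, v \in gB x & v \in gB y]] (lshift n2.+1 a) (lshift n2.+1 b).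
    move=> va vb; have := @connect_hom _ _ _ [rel x y | [&& gtr tr1 tr2 i1 i2 x y, v \in gB x & v \in gB y]] (@lshift n1.+1 n2.+1) _ _ _ (Con1 v a b va vb).
    apply => x y /and3P[h1 h2 h3]; apply: connect1; by rewrite /= gtrLL !gBL h1 h2 h3.
  have HR a b : v \in B2 a -> v \in B2 b ->
      connect [rel x y | [&& gtr tr1 tr2 i1 i2 x y, v \in gB x & v \in gB y]] (rshift n1.+1 a) (rshift n1.+1 b).
    move=> va vb; have := @connect_hom _ _ _ [rel x y | [&& gtr tr1 tr2 i1 i2 x y, v \in gB x & v \in gB y]] (@rshift n1.+1 n2.+1) _ _ _ (Con2 v a b va vb).
    apply => x y /and3P[h1 h2 h3]; apply: connect1; by rewrite /= gtrRR !gBR h1 h2 h3.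
  have Rs : connect_sym [rel x y | [&& gtr tr1 tr2 i1 i2 x y, v \in gB x & v \in gB y]].
    apply: sym_connect_sym => x y /=; rewrite gs; case: (gtr _ _ _ _ y x) => //=; exact: andbC.
  have HLR a b : v \in B1 a -> v \in B2 b ->
      connect [rel x y | [&& gtr tr1 tr2 i1 i2 x y, v \in gB x & v \in gB y]] (lshift n2.+1 a) (rshift n1.+1 b).
    move=> va vb.
    have vK : v \in A :&: B by rewrite inE (subsetP (Bs1 a) _ va) (subsetP (Bs2 b) _ vb).
    apply: connect_trans (HL a i1 va (subsetP Ki1 _ vK)) _.
    apply: connect_trans _ (HR i2 b (subsetP Ki2 _ vK) vb).
    by apply: connect1; rewrite /= gtrLR gBL gBR !eqxx (subsetP Ki1 _ vK) (subsetP Ki2 _ vK).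
  move: i j; elim/node_ind => a; elim/node_ind => b; rewrite ?gBL ?gBR => va vb.
  + exact: HL.
  + exact: HLR.
  + by rewrite Rs; exact: HLR.
  + exact: HR.
Qed.
End GD.

End Aux.


Theorem mainTheorem7 (T : finType) (e : rel T)
  (e_sym : symmetric e) (e_irr : irreflexive e)
  (t : nat) (X C : {set T}) :
  tidy_modulator e X ->
  component_of e (~: X) C ->
  limit_clique e (~: C) t 2 (nbhd e C) ->
  (forall x y, x \in nbhd e C -> y \in nbhd e C -> x != y ->
     tw_le e (C :|: [set x; y]) 2 \/ limit_subset e (~: C) t 1 [set x; y]) ->
  ((exists S, solution e [set: T] t S) <-> (exists S, solution e (~: C) t S)).
Proof.
move=> [modX tidy] [CW C0 Cconn Csep] [lim2 clq] Hpair; split.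
  case=> S [_ Sc tw]; exists (S :&: ~: C); split.
  - exact: subsetIr.
  - exact: leq_trans (subset_leq_card (subsetIl _ _)) Sc.
  - refine (tw_mono tw _); apply/subsetP => x; rewrite !inE.
    by case: (x \in C); case: (x \in S).
case=> S solS; have solS' := solS; case: solS' => [SC Sc tw].
exists S; split; [exact: subsetT | exact: Sc | ].
have inN x : (x \in nbhd e C) = (x \notin C) && [exists u in C, e u x] by rewrite inE.
have NX x : x \in nbhd e C -> x \in X.
  rewrite inN => /andP[xC /existsP[u /andP[uC eux]]].
  apply/negPn/negP => xX.
  by move: (Csep u x uC); rewrite !inE xX xC eux => /(_ isT).
set K := nbhd e C :\: S.
have KN : K \subset nbhd e C by apply: subsetDl.
have Kc : #|K| <= 2 by apply: lim2.
have KnC x : x \in K -> x \notin C by move/(subsetP KN); rewrite inN => /andP[].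
have KnS x : x \in K -> x \notin S by rewrite inE => /andP[].
have twB : tw_le e (C :|: K) 2.
  have : (#|K| == 0) || (#|K| == 1) || (#|K| == 2) by case: #|K| Kc => [|[|[|]]].
  case/orP => [/orP[]|].
  - rewrite cards_eq0 => /eqP ->; rewrite setU0; refine (tw_mono modX _).
    by apply/subsetP => x xC; rewrite inE; move: (subsetP CW x xC); rewrite inE.
  - case/cards1P => x Kx.
    have xX : x \in X by apply: NX; apply: (subsetP KN); rewrite Kx set11.
    refine (tw_mono (tidy x xX) _); rewrite Kx; apply/subsetP => y; rewrite !inE.
    case/orP => [yC|/eqP ->]; last by rewrite eqxx.
    by move: (subsetP CW y yC); rewrite inE => /negbTE ->; rewrite andbF.
  - case/cards2P => x [y [xy Kxy]].
    have xN : x \in nbhd e C by apply: (subsetP KN); rewrite Kxy !inE eqxx.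
    have yN : y \in nbhd e C by apply: (subsetP KN); rewrite Kxy !inE eqxx orbT.
    case: (Hpair x y xN yN xy); first by rewrite Kxy.
    move=> /(_ S solS).
    have -> : [set x; y] :\: S = K.
      have xS : x \notin S by apply: KnS; rewrite Kxy !inE eqxx.
      have yS : y \notin S by apply: KnS; rewrite Kxy !inE eqxx orbT.
      rewrite Kxy; apply/setP => z; rewrite !inE.
      case Hz: ((z == x) || (z == y)); rewrite ?andbF ?andbT //.
      by case/orP: Hz => /eqP ->.
    by rewrite Kxy cards2 xy.
have KA : K \subset ~: C :\: S.
  by apply/subsetP => x xK; rewrite !inE KnS // KnC.
have AB : (~: C :\: S) :&: (C :|: K) \subset K.
  apply/subsetP => x; rewrite !inE => /andP[/andP[xS xC] /orP[xC'|//]].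
  by rewrite xC' in xC.
have twU : tw_le e ((~: C :\: S) :|: (C :|: K)) 2.
  refine (glue_tw e_sym tw twB (leq_trans (subset_leq_card AB) Kc) _ _).
  - move=> u v /(subsetP AB) uK /(subsetP AB) vK uv.
    by apply: clq => //; apply: (subsetP KN).
  - move=> u v; rewrite !inE => /andP[uA uB] /andP[vB vA].
    have uC : u \in C.
      case/orP: uB => // /and3P[uS uC _]; by rewrite uS uC in uA.
    case/andP: vA => vS vC; apply/negP => euv; move/negP: vB; apply.
    by rewrite vS vC /=; apply/orP; right; apply/existsP; exists u; rewrite uC euv.
refine (tw_mono twU _); apply/subsetP => x; rewrite !inE => xS.
by case: (x \in C); rewrite ?orbT //= xS.
Qed.
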